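(* Let $\{\mathcal G,(\Gamma_0,\Gamma_1),(\widetilde\Gamma_0,\widetilde\Gamma_1)\}$ be a triple for the adjoint pair $\{S,\widetilde S\}$ satisfying (G), (D), (M), and assume $\rho(A_0)\neq\emptyset$ (equivalently $\rho(\widetilde A_0)\neq\emptyset$). Let $\gamma,\widetilde\gamma$ be the associated $\gamma$-fields. Then for all $\lambda\in\rho(A_0)$ and $\mu\in\rho(\widetilde A_0)$: (i) $\gamma(\lambda)$ and $\widetilde\gamma(\mu)$ are bounded operators from $\mathcal G$ to $\mathfrak H$ with dense domains $\operatorname{dom}\gamma(\lambda)=\operatorname{ran}\Gamma_0$, $\operatorname{dom}\widetilde\gamma(\mu)=\operatorname{ran}\widetilde\Gamma_0$, and $\operatorname{ran}\gamma(\lambda)=\ker(T-\lambda)$, $\operatorname{ran}\widetilde\gamma(\mu)=\ker(\widetilde T-\mu)$; (ii) for $\varphi\in\operatorname{ran}\Gamma_0$ and $\psi\in\operatorname{ran}\widetilde\Gamma_0$ the functions $\lambda\mapsto\gamma(\lambda)\varphi$ and $\mu\mapsto\widetilde\gamma(\mu)\psi$ are holomorphic on $\rho(A_0)$ and $\rho(\widetilde A_0)$, respectively, and $\gamma(\lambda)=(I+(\lambda-\nu)(A_0-\lambda)^{-1})\gamma(\nu)$ for $\lambda,\nu\in\rho(A_0)$, $\widetilde\gamma(\mu)=(I+(\mu-\omega)(\widetilde A_0-\mu)^{-1})\widetilde\gamma(\omega)$ for $\mu,\omega\in\rho(\widetilde A_0)$; (iii) $\gamma(\lambda)^*$ and $\widetilde\gamma(\mu)^*$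 are everywhere defined bounded operators from $\mathfrak H$ to $\mathcal G$ with $\gamma(\lambda)^*f=\widetilde\Gamma_1(\widetilde A_0-\overline\lambda)^{-1}f$ and $\widetilde\gamma(\mu)^*g=\Gamma_1(A_0-\overline\mu)^{-1}g$ for all $f,g\in\mathfrak H$; in particular $\operatorname{ran}\gamma(\lambda)^*\subset\operatorname{ran}\widetilde\Gamma_1$ and $\operatorname{ran}\widetilde\gamma(\mu)^*\subset\operatorname{ran}\Gamma_1$.
   Context: Let $\mathfrak H$ be a separable Hilbert space. An adjoint pair $\{S,\widetilde S\}$ consists of densely defined closed operators $S,\widetilde S$ in $\mathfrak H$ with $(Sf,g)=(f,\widetilde Sg)$ for all $f\in\operatorname{dom}S$, $g\in\operatorname{dom}\widetilde S$. Fix operators $T\subset S^*$ and $\widetilde T\subset\widetilde S^*$ which are cores, i.e. $\overline T=S^*$ and $\overline{\widetilde T}=\widetilde S^*$. A triple $\{\mathcal G,(\Gamma_0,\Gamma_1),(\widetilde\Gamma_0,\widetilde\Gamma_1)\}$ for $\{S,\widetilde S\}$ consists of a Hilbert space $\mathcal G$ and linear maps $\Gamma_0,\Gamma_1:\operatorname{dom}T\to\mathcal G$, $\widetilde\Gamma_0,\widetilde\Gamma_1:\operatorname{dom}\widetilde T\to\mathcal G$. Put $A_0:=T\upharpoonright\ker\Gamma_0$ and $\widetilde A_0:=\widetilde T\upharpoonright\ker\widetilde\Gamma_0$. Conditions: (G) $(Tf,g)_{\mathfrak H}-(f,\widetilde Tg)_{\mathfrak H}=(\Gamma_1f,\widetilde\Gamma_0g)_{\mathcal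 G}-(\Gamma_0f,\widetilde\Gamma_1g)_{\mathcal G}$ for all $f\in\operatorname{dom}T$, $g\in\operatorname{dom}\widetilde T$; (D) $\operatorname{ran}\Gamma_0$ and $\operatorname{ran}\widetilde\Gamma_0$ are dense in $\mathcal G$; (M) $A_0^*=\widetilde A_0$ and $\widetilde A_0^*=A_0$. For $\lambda\in\rho(A_0)$ one has $\operatorname{dom}T=\ker\Gamma_0\dotplus\ker(T-\lambda)$, so $\Gamma_0\upharpoonright\ker(T-\lambda)$ is injective with range $\operatorname{ran}\Gamma_0$; similarly for $\widetilde T$. The $\gamma$-fields are $\gamma(\lambda):=(\Gamma_0\upharpoonright\ker(T-\lambda))^{-1}$, $\lambda\in\rho(A_0)$, and $\widetilde\gamma(\mu):=(\widetilde\Gamma_0\upharpoonright\ker(\widetilde T-\mu))^{-1}$, $\mu\in\rho(\widetilde A_0)$. *)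

(* Defs.v *)
From HB Require Import structures.
From mathcomp Require Import all_boot all_order all_algebra.
From mathcomp Require Import complex.
From mathcomp Require Import reals.
From Stdlib Require Import ClassicalEpsilon.
Set Implicit Arguments. Unset Strict Implicit. Unset Printing Implicit Defensive.
Import Order.TTheory GRing.Theory Num.Theory.
Local Open Scope ring_scope.

Section Hilbert.
Variable R : realType.
Local Notation C := (R[i]).

Section Space.
Variable V : lmodType C.
Variable ip : V -> V -> C.   (* linear in 1st argument, antilinear in 2nd *)

Definition vnorm (x : V) : C := sqrtC (ip x x).

Definition is_inner_product : Prop :=
  [/\ forall (a : C) (x y z : V), ip (a *: x + y) z = a * ip x z + ip y z,
      forall x y : V, ip y x = conjc (ip x y),
      forall x : V, 0 <= ip x x &
      forall x : V, ip x x = 0 -> x = 0].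

Definition converges (u : nat -> V) (l : V) : Prop :=
  forall e : C, 0 < e -> exists N : nat, forall n, (N <= n)%N -> vnorm (u n - l) < e.

Definition cauchy_seq (u : nat -> V) : Prop :=
  forall e : C, 0 < e -> exists N : nat, forall n m, (N <= n)%N -> (N <= m)%N ->
    vnorm (u n - u m) < e.

Definition dense (D : V -> Prop) : Prop :=
  forall (x : V) (e : C), 0 < e -> exists y, D y /\ vnorm (x - y) < e.

Definition is_hilbert : Prop :=
  is_inner_product /\ forall u, cauchy_seq u -> exists l, converges u l.

Definition is_separable : Prop :=
  exists u : nat -> V, dense (fun x => exists n, x = u n).

End Space.

Record op (V W : lmodType C) := Op { dom : V -> Prop ; app : V -> W }.

Section Ops.
Variables (V W : lmodType C) (ipV : V -> V -> C) (ipW : W -> W -> C).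

Definition is_subspace (D : V -> Prop) : Prop :=
  D 0 /\ forall (a : C) x y, D x -> D y -> D (a *: x + y).

Definition linear_on (D : V -> Prop) (f : V -> W) : Prop :=
  is_subspace D /\
  forall (a : C) x y, D x -> D y -> f (a *: x + y) = a *: f x + f y.

Definition linear_op (A : op V W) : Prop := linear_on (dom A) (app A).

Definition densely_defined (A : op V W) : Prop := linear_op A /\ dense ipV (dom A).

Definition closed_op (A : op V W) : Prop :=
  linear_op A /\
  forall (u : nat -> V) x y, (forall n, dom A (u n)) ->
    converges ipV u x -> converges ipW (fun n => app A (u n)) y ->
    dom A x /\ app A x = y.

Definition bounded_op (A : op V W) : Prop :=
  linear_op A /\
  exists c : C, 0 <= c /\ forall x, dom A x -> vnorm ipW (app A x) <= c * vnorm ipV x.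

Definition op_sub (A B : op V W) : Prop :=
  forall x, dom A x -> dom B x /\ app B x = app A x.

(* B is the closure of A: graph B = closure of graph A (in V × W) *)
Definition is_closure_of (A B : op V W) : Prop :=
  forall x y, (dom B x /\ app B x = y) <->
    exists u : nat -> V, (forall n, dom A (u n)) /\
      converges ipV u x /\ converges ipW (fun n => app A (u n)) y.

Definition range (A : op V W) (y : W) : Prop := exists x, dom A x /\ app A x = y.

End Ops.

Definition is_adjoint (V W : lmodType C) (ipV : V -> V -> C) (ipW : W -> W -> C)
  (A : op V W) (B : op W V) : Prop :=
  forall (w : W) (v : V), (dom B w /\ app B w = v) <->
    (forall x, dom A x -> ipW (app A x) w = ipV x v).

Definition adjoint_pair (V : lmodType C) (ip : V -> V -> C) (S St : op V V) : Prop :=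
  [/\ densely_defined ip S, densely_defined ip St, closed_op ip ip S, closed_op ip ip St &
      forall f g, dom S f -> dom St g -> ip (app S f) g = ip f (app St g)].

Section Resolvent.
Variables (V : lmodType C) (ip : V -> V -> C).

Definition in_resolvent (A : op V V) (l : C) : Prop :=
  [/\ forall x, dom A x -> app A x = l *: x -> x = 0,
      forall y, exists x, dom A x /\ app A x - l *: x = y &
      exists c : C, 0 <= c /\ forall x, dom A x -> vnorm ip x <= c * vnorm ip (app A x - l *: x)].

(* (A - lambda)^{-1} y  (meaningful for lambda in rho(A)) *)
Definition resolv (A : op V V) (l : C) (y : V) : V :=
  epsilon (inhabits 0) (fun x => dom A x /\ app A x - l *: x = y).

Definition holomorphic_on (U : C -> Prop) (F : C -> V) : Prop :=
  forall z, U z -> exists v : V, forall e : C, 0 < e -> exists d : C, 0 < d /\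
    forall w, U w -> w != z -> `|w - z| < d ->
      vnorm ip ((w - z)^-1 *: (F w - F z) - v) < e.

End Resolvent.

Definition restr_ker (V W : lmodType C) (T : op V V) (G0 : V -> W) : op V V :=
  Op (fun f => dom T f /\ G0 f = 0) (app T).

(* gamma-field: gamma(lambda) = (Gamma0 |` ker(T - lambda))^{-1},
   an operator G -> H with domain ran Gamma0 *)
Definition gamma_field (V W : lmodType C) (T : op V V) (G0 : V -> W) (l : C) : op W V :=
  Op (fun phi => exists f, dom T f /\ G0 f = phi)
     (fun phi => epsilon (inhabits 0)
        (fun f => dom T f /\ app T f = l *: f /\ G0 f = phi)).

Definition ker_shift (V : lmodType C) (T : op V V) (l : C) (f : V) : Prop :=
  dom T f /\ app T f = l *: f.

End Hilbert.

(* Main.v *)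
Require Import Defs.
From HB Require Import structures.
From mathcomp Require Import all_boot all_order all_algebra.
From mathcomp Require Import complex reals.
From mathcomp Require Import lra ring.
From Stdlib Require Import ClassicalEpsilon Classical.
Set Implicit Arguments. Unset Strict Implicit. Unset Printing Implicit Defensive.
Import Order.TTheory GRing.Theory Num.Theory.
Local Open Scope ring_scope.
Local Open Scope complex_scope.

Section IP.
Variable R : realType.
Local Notation C := (R[i]).
Variable V : lmodType C.
Variable ip : V -> V -> C.
Hypothesis hip : is_inner_product ip.

Lemma ipDZl a x y z : ip (a *: x + y) z = a * ip x z + ip y z.
Proof. by case: hip => h _ _ _; apply: h. Qed.
Lemma ipC x y : ip y x = conjc (ip x y).
Proof. by case: hip => _ h _ _; apply: h. Qed.
Lemma ip_ge0 x : 0 <= ip x x.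
Proof. by case: hip => _ _ h _; apply: h. Qed.
Lemma ip_eq0 x : ip x x = 0 -> x = 0.
Proof. by case: hip => _ _ _ h; apply: h. Qed.

Lemma ip0l z : ip 0 z = 0.
Proof.
have := ipDZl 1 0 0 z; rewrite scale1r addr0 mul1r => /eqP.
by rewrite -subr_eq0 opprD addrA subrr add0r oppr_eq0 => /eqP.
Qed.
Lemma ipDl x y z : ip (x + y) z = ip x z + ip y z.
Proof. by rewrite -[x]scale1r ipDZl mul1r scale1r. Qed.
Lemma ipZl a x z : ip (a *: x) z = a * ip x z.
Proof. by rewrite -[a *: x]addr0 ipDZl ip0l addr0. Qed.
Lemma ipNl x z : ip (- x) z = - ip x z.
Proof. by rewrite -scaleN1r ipZl mulN1r. Qed.
Lemma ipBl x y z : ip (x - y) z = ip x z - ip y z.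
Proof. by rewrite ipDl ipNl. Qed.
Lemma ip0r z : ip z 0 = 0.
Proof. by rewrite ipC ip0l conjc0. Qed.
Lemma ipDr x y z : ip z (x + y) = ip z x + ip z y.
Proof. by rewrite ipC ipDl rmorphD /= -!ipC. Qed.
Lemma ipZr a x z : ip z (a *: x) = conjc a * ip z x.
Proof. by rewrite ipC ipZl rmorphM /= -ipC. Qed.
Lemma ipNr x z : ip z (- x) = - ip z x.
Proof. by rewrite ipC ipNl rmorphN /= -ipC. Qed.
Lemma ipBr x y z : ip z (x - y) = ip z x - ip z y.
Proof. by rewrite ipDr ipNr. Qed.

Definition Q x : R := complex.Re (ip x x).
Lemma ipxx x : ip x x = (Q x)%:C.
Proof.
have := ip_ge0 x; rewrite /Q; case: (ip x x) => a b.
rewrite lecE /= => /andP [/eqP h _].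
by rewrite h.
Qed.
Lemma Q_ge0 x : 0 <= Q x.
Proof. by have := ip_ge0 x; rewrite ipxx lecR. Qed.
Lemma Q_eq0 x : Q x = 0 -> x = 0.
Proof. by move=> h; apply: ip_eq0; rewrite ipxx h. Qed.

Definition nrm x : R := Num.sqrt (Q x).
Lemma nrm_ge0 x : 0 <= nrm x. Proof. exact: sqrtr_ge0. Qed.
Lemma nrm_sq x : nrm x ^+ 2 = Q x. Proof. by rewrite sqr_sqrtr // Q_ge0. Qed.
Lemma vnormE x : vnorm ip x = (nrm x)%:C.
Proof.
rewrite /vnorm ipxx -nrm_sq rmorphXn /=.
by rewrite sqrCK // lecR nrm_ge0.
Qed.
Lemma nrm_eq0 x : nrm x = 0 -> x = 0.
Proof. by move=> h; apply: Q_eq0; rewrite -nrm_sq h expr0n. Qed.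
Lemma nrm0 : nrm 0 = 0.
Proof. by rewrite /nrm /Q ip0l /= sqrtr0. Qed.

End IP.

Section IP2.
Variable R : realType.
Local Notation C := (R[i]).
Variable V : lmodType C.
Variable ip : V -> V -> C.
Hypothesis hip : is_inner_product ip.

Definition mag (z : C) : R := Num.sqrt (complex.Re z ^+ 2 + complex.Im z ^+ 2).

Lemma CS2 x y : complex.Re (ip x y) ^+ 2 + complex.Im (ip x y) ^+ 2 <= Q ip x * Q ip y.
Proof.
have [qy0|qy0] := eqVneq (Q ip y) 0.
  by move/(Q_eq0 hip): qy0 => ->; rewrite /Q !(ip0r hip) /= expr0n /= addr0 mulr0.
have qpos : 0 < Q ip y by rewrite lt_def qy0 Q_ge0.
have h := Q_ge0 hip ((Q ip y)%:C *: x - ip x y *: y).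
rewrite /Q in h.
rewrite (ipBl hip) !(ipBr hip) !(ipZl hip) !(ipZr hip) !(ipxx hip) (ipC hip x y) in h.
move: h qpos; rewrite conjc_real.
case: (ip x y) => a1 a2.
move: (Q ip y) (Q ip x) => q p /=.
move=> h hq.
have : 0 <= q * (q * p - (a1 ^+ 2 + a2 ^+ 2)) by lra.
rewrite pmulr_rge0 //; lra.
Qed.


Lemma sq_le (a b : R) : 0 <= b -> a ^+ 2 <= b ^+ 2 -> a <= b.
Proof. move=> hb h; rewrite leNgt; apply/negP => hab; nra. Qed.

Lemma mag_ge0 z : 0 <= mag z. Proof. exact: sqrtr_ge0. Qed.
Lemma mag_sq z : mag z ^+ 2 = complex.Re z ^+ 2 + complex.Im z ^+ 2.
Proof. by rewrite sqr_sqrtr // addr_ge0 // sqr_ge0. Qed.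
Lemma normE z : `|z| = (mag z)%:C.
Proof. by rewrite normc_def. Qed.
Lemma magM a b : mag (a * b) = mag a * mag b.
Proof. by apply: complexI; rewrite rmorphM /= -!normE normrM. Qed.
Lemma magD a b : mag (a + b) <= mag a + mag b.
Proof. by rewrite -lecR rmorphD /= -!normE ler_normD. Qed.
Lemma magN a : mag (- a) = mag a.
Proof. by apply: complexI; rewrite -!normE normrN. Qed.
Lemma magB a b : mag (a - b) = mag (b - a).
Proof. by rewrite -magN opprB. Qed.
Lemma magR r : mag r%:C = `|r|.
Proof. by rewrite /mag /= expr0n /= addr0 sqrtr_sqr. Qed.
Lemma magJ a : mag (conjc a) = mag a.
Proof. by case: a => a b; rewrite /mag /= sqrrN. Qed.
Lemma mag_eq0 a : mag a = 0 -> a = 0.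
Proof. by move=> h; apply/normr0_eq0; rewrite normE h. Qed.
Lemma Re_le_mag a : `|complex.Re a| <= mag a.
Proof.
apply: sq_le; first exact: mag_ge0.
by rewrite mag_sq real_normK ?num_real // lerDl sqr_ge0.
Qed.
Lemma Im_le_mag a : `|complex.Im a| <= mag a.
Proof.
apply: sq_le; first exact: mag_ge0.
by rewrite mag_sq real_normK ?num_real // lerDr sqr_ge0.
Qed.
Lemma posC (e : C) : 0 < e -> e = (complex.Re e)%:C /\ 0 < complex.Re e.
Proof. by case: e => a b; rewrite ltcE /= => /andP [/eqP -> h]. Qed.
Lemma nnegC (e : C) : 0 <= e -> e = (complex.Re e)%:C /\ 0 <= complex.Re e.
Proof. by case: e => a b; rewrite lecE /= => /andP [/eqP -> h]. Qed.

Lemma CS x y : mag (ip x y) <= nrm ip x * nrm ip y.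
Proof.
apply: sq_le; first by rewrite mulr_ge0 // nrm_ge0.
by rewrite mag_sq exprMn !nrm_sq // CS2.
Qed.

Lemma Q_add x y : Q ip (x + y) = Q ip x + Q ip y + 2 * complex.Re (ip x y).
Proof.
rewrite /Q (ipDl hip) !(ipDr hip) (ipC hip x y).
case: (ip x y) => a b /=; rewrite !raddfD /=; lra.
Qed.

Lemma nrmD x y : nrm ip (x + y) <= nrm ip x + nrm ip y.
Proof.
apply: sq_le; first by rewrite addr_ge0 // nrm_ge0.
rewrite nrm_sq // Q_add sqrrD !nrm_sq //.
have h1 := CS x y; have h2 := Re_le_mag (ip x y).
have h3 : complex.Re (ip x y) <= `|complex.Re (ip x y)| by apply: ler_norm.
lra.
Qed.

Lemma Q_scale a x : Q ip (a *: x) = mag a ^+ 2 * Q ip x.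
Proof.
rewrite /Q (ipZl hip) (ipZr hip) (ipxx hip) mag_sq.
by case: a => a b /=; lra.
Qed.

Lemma nrmZ a x : nrm ip (a *: x) = mag a * nrm ip x.
Proof. by rewrite /nrm Q_scale sqrtrM ?sqr_ge0 // sqrtr_sqr ger0_norm // mag_ge0. Qed.
Lemma nrmN x : nrm ip (- x) = nrm ip x.
Proof. by rewrite -scaleN1r nrmZ magN -(rmorph1 (real_complex R)) magR normr1 mul1r. Qed.
Lemma nrmB x y : nrm ip (x - y) = nrm ip (y - x).
Proof. by rewrite -nrmN opprB. Qed.
Lemma nrmZR (r : R) x : nrm ip (r%:C *: x) = `|r| * nrm ip x.
Proof. by rewrite nrmZ magR. Qed.

End IP2.

Section Seq.
Variable R : realType.
Local Notation C := (R[i]).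

Lemma le_eps (a b : R) : (forall e, 0 < e -> a <= b + e) -> a <= b.
Proof.
move=> h; rewrite leNgt; apply/negP => hab.
have := h ((a - b) / 2); lra.
Qed.

Definition clim (s : nat -> C) (c : C) :=
  forall e : R, 0 < e -> exists N, forall n, (N <= n)%N -> mag (s n - c) < e.

Lemma clim_unique s c d : clim s c -> clim s d -> c = d.
Proof.
move=> hc hd; apply/eqP; rewrite -subr_eq0; apply/eqP; apply: mag_eq0.
apply/eqP; rewrite eq_le mag_ge0 andbT; apply: le_eps => e he.
have [N1 h1] := hc (e/2) ltac:(lra).
have [N2 h2] := hd (e/2) ltac:(lra).
have := h1 (maxn N1 N2) (leq_maxl _ _); have := h2 (maxn N1 N2) (leq_maxr _ _).
have := magD (s (maxn N1 N2) - d) (c - s (maxn N1 N2)).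
rewrite magB addrC addrA subrK [mag (s _ - c)]magB => h3 h4 h5.
have := mag_ge0 (c - d); lra.
Qed.

Lemma clim_ext s t c : (forall n, s n = t n) -> clim s c -> clim t c.
Proof. by move=> st h e he; have [N hN] := h e he; exists N => n hn; rewrite -st hN. Qed.

Lemma clim_cst c : clim (fun _ => c) c.
Proof. by move=> e he; exists 0%N => n _; rewrite subrr (magR 0) normr0. Qed.

Variable V : lmodType C.
Variable ip : V -> V -> C.
Hypothesis hip : is_inner_product ip.

Definition conv (u : nat -> V) (l : V) :=
  forall e : R, 0 < e -> exists N, forall n, (N <= n)%N -> nrm ip (u n - l) < e.

Lemma convP u l : converges ip u l <-> conv u l.
Proof.
split => h e he.
  have [N hN] := h e%:C ltac:(by rewrite ltcR).
  by exists N => n /hN; rewrite (vnormE hip) ltcR.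
have [-> he'] := posC he; have [N hN] := h _ he'.
by exists N => n /hN; rewrite (vnormE hip) ltcR.
Qed.

Definition cauchy (u : nat -> V) :=
  forall e : R, 0 < e -> exists N, forall n m, (N <= n)%N -> (N <= m)%N -> nrm ip (u n - u m) < e.

Lemma cauchyP u : cauchy_seq ip u <-> cauchy u.
Proof.
split => h e he.
  have [N hN] := h e%:C ltac:(by rewrite ltcR).
  by exists N => n m /hN h2 /h2; rewrite (vnormE hip) ltcR.
have [-> he'] := posC he; have [N hN] := h _ he'.
by exists N => n m /hN h2 /h2; rewrite (vnormE hip) ltcR.
Qed.

Lemma complete_conv (hc : is_hilbert ip) u : cauchy u -> exists l, conv u l.
Proof.
by case: hc => _ hc /cauchyP /hc [l /convP hl]; exists l.
Qed.

Lemma clim_ipl u x z : conv u x -> clim (fun n => ip (u n) z) (ip x z).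
Proof.
move=> h e he.
have [N hN] := h (e / (nrm ip z + 1)) ltac:(apply: divr_gt0 => //; have := nrm_ge0 ip z; lra).
exists N => n /hN hn; rewrite -(ipBl hip).
apply: (le_lt_trans (CS hip _ _)).
have hz := nrm_ge0 ip z; have hu := nrm_ge0 ip (u n - x).
rewrite ltr_pdivlMr in hn; last lra.
nra.
Qed.

Lemma clim_ipr u x z : conv u x -> clim (fun n => ip z (u n)) (ip z x).
Proof.
move=> h e he; have [N hN] := clim_ipl z h he.
by exists N => n /hN; rewrite !(ipC hip z) -rmorphB magJ.
Qed.

Lemma conv_unique u x y : conv u x -> conv u y -> x = y.
Proof.
move=> hx hy; apply/eqP; rewrite -subr_eq0; apply/eqP; apply: (nrm_eq0 hip).
apply/eqP; rewrite eq_le nrm_ge0 andbT; apply: le_eps => e he.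
have [N1 h1] := hx (e/2) ltac:(lra).
have [N2 h2] := hy (e/2) ltac:(lra).
have := h1 (maxn N1 N2) (leq_maxl _ _); have := h2 (maxn N1 N2) (leq_maxr _ _).
have := nrmD hip (u (maxn N1 N2) - y) (x - u (maxn N1 N2)).
rewrite (nrmB hip (u _) y) addrC addrA subrK [nrm ip (u _ - x)](nrmB hip) => h3 h4 h5.
have := nrm_ge0 ip (x - y); lra.
Qed.

Lemma orth_dense (D : V -> Prop) w : dense ip D -> (forall x, D x -> ip x w = 0) -> w = 0.
Proof.
move=> hD hw; apply: (nrm_eq0 hip); apply/eqP; rewrite eq_le nrm_ge0 andbT.
apply: le_eps => e he.
have [y [Dy hy]] := hD w (e%:C) ltac:(by rewrite ltcR).
rewrite (vnormE hip) ltcR in hy.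
have : Q ip w = complex.Re (ip (w - y) w) by rewrite /Q (ipBl hip) (hw y Dy) subr0.
have := Re_le_mag (ip (w - y) w); have := CS hip (w - y) w.
have := ler_norm (complex.Re (ip (w - y) w)).
rewrite -(nrm_sq hip) => h1 h2 h3 h4.
have hn := nrm_ge0 ip w; have hy0 := nrm_ge0 ip (w - y).
rewrite add0r; nra.
Qed.

End Seq.

Section Eps.
Variable R : realType.
Definition eps (n : nat) : R := (n.+1%:R)^-1.
Lemma eps_pos n : 0 < eps n.
Proof. by rewrite /eps invr_gt0 ltr0Sn. Qed.
Lemma eps_le1 n : eps n <= 1.
Proof. by rewrite /eps invf_le1 ?ltr0Sn // ler1n. Qed.
Lemma eps_anti k n : (k <= n)%N -> eps n <= eps k.
Proof. by move=> h; rewrite /eps lef_pV2 ?posrE ?ltr0Sn // ler_nat ltnS. Qed.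
Lemma eps_small (c : R) : 0 < c -> exists k, eps k < c.
Proof. by move=> /(ltr_add_invr) [k]; rewrite add0r => h; exists k. Qed.
End Eps.

Section Proj.
Variable R : realType.
Local Notation C := (R[i]).
Variable V : lmodType C.
Variable ip : V -> V -> C.
Hypothesis hH : is_hilbert ip.
Let hip : is_inner_product ip. Proof. by case: hH. Qed.

Lemma sub_scale (M : V -> Prop) a x : is_subspace M -> M x -> M (a *: x).
Proof. by case=> h0 h hx; have := h a x 0 hx h0; rewrite addr0. Qed.
Lemma sub_add (M : V -> Prop) x y : is_subspace M -> M x -> M y -> M (x + y).
Proof. by case=> h0 h hx hy; have := h 1 x y hx hy; rewrite scale1r. Qed.
Lemma sub_opp (M : V -> Prop) x : is_subspace M -> M x -> M (- x).
Proof. by move=> hs hx; rewrite -scaleN1r; apply: sub_scale. Qed.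
Lemma sub_sub (M : V -> Prop) x y : is_subspace M -> M x -> M y -> M (x - y).
Proof. by move=> hs hx hy; apply: sub_add => //; apply: sub_opp. Qed.

Lemma paral a b : Q ip (a + b) + Q ip (a - b) = 2 * Q ip a + 2 * Q ip b.
Proof.
rewrite !(Q_add hip) -(nrm_sq hip (- b)) (nrmN hip) (nrm_sq hip) (ipNr hip).
rewrite raddfN /=; lra.
Qed.

Lemma full_of_orth (M : V -> Prop) (hs : is_subspace M)
  (hcl : forall u x, (forall n, M (u n)) -> conv ip u x -> M x)
  (horth : forall w, (forall z, M z -> ip z w = 0) -> w = 0) : forall y, M y.
Proof.
move=> y.
pose E := fun r : R => exists m, M m /\ r = nrm ip (y - m).
have hE0 : E (nrm ip (y - 0)) by exists 0; split => //; case: hs.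
have hinf : classical_sets.has_inf E.
  split; first by exists (nrm ip (y - 0)).
  by exists 0 => r [m [_ ->]]; apply: nrm_ge0.
pose d := inf E.
have dlow : forall m, M m -> d <= nrm ip (y - m).
  by move=> m hm; apply: (ge_inf (proj2 hinf)); exists m.
have d0 : 0 <= d.
  apply: lb_le_inf; first by exists (nrm ip (y - 0)).
  by move=> r [m [_ ->]]; apply: nrm_ge0.
have happ : forall n, exists m, M m /\ nrm ip (y - m) < d + eps R n.
  move=> n; have [r [m [hm ->]] hr] := inf_adherent (eps_pos R n) hinf.
  by exists m.
pose m n := epsilon (inhabits 0) (fun m => M m /\ nrm ip (y - m) < d + eps R n).
have hm : forall n, M (m n) /\ nrm ip (y - m n) < d + eps R n.
  by move=> n; apply: (epsilon_spec (inhabits 0) _ (happ n)).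
have hQ : forall n k, Q ip (m n - m k) <= (4 * d + 4) * (eps R n + eps R k).
  move=> n k.
  have mid : M ((2^-1 : C) *: (m n + m k)).
    by apply: sub_scale => //; apply: sub_add => //; [exact: (proj1 (hm n))|exact: (proj1 (hm k))].
  have := dlow _ mid.
  have e1 : (y - m n) + (y - m k) = (2%:R : C) *: (y - (2^-1 : C) *: (m n + m k)).
    rewrite scalerBr scalerA mulfV ?pnatr_eq0 // scale1r scaler_nat mulr2n.
    by rewrite opprD addrACA.
  have e2 : (y - m n) - (y - m k) = - (m n - m k).
    by rewrite [y - m n]addrC addrKA opprK opprB addrC.
  have := paral (y - m n) (y - m k); rewrite e1 e2 -(nrm_sq hip (- _)) (nrmN hip).
  rewrite (Q_scale hip) -(rmorph_nat (real_complex R)) magR normr_nat (nrm_sq hip).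
  rewrite -!(nrm_sq hip).
  have := proj2 (hm n); have := proj2 (hm k).
  have := eps_pos R n; have := eps_pos R k; have := eps_le1 R n; have := eps_le1 R k.
  have := nrm_ge0 ip (y - m n); have := nrm_ge0 ip (y - m k).
  have := nrm_ge0 ip (y - (2^-1 : C) *: (m n + m k)).
  move: (nrm ip _) (nrm ip _) (nrm ip _) (nrm ip (m n - m k)) (eps R n) (eps R k).
  move=> a b c q en ek; rewrite -[2%:R]/(2 : R); nra.
have hc : cauchy ip m.
  move=> e he.
  have hpos : 0 < 8 * d + 8 by lra.
  have [k hk] := eps_small (divr_gt0 (mulr_gt0 he he) hpos).
  exists k => n l hn hl.
  rewrite ltNge; apply/negP => hle.
  have := hQ n l; rewrite -(nrm_sq hip).
  have := eps_anti R hn; have := eps_anti R hl.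
  rewrite ltr_pdivlMr in hk => //.
  have := eps_pos R k.
  have : e ^+ 2 <= nrm ip (m n - m l) ^+ 2 by rewrite ler_sqr ?nnegrE ?nrm_ge0 //; lra.
  nra.
have [ms hms] := complete_conv hip hH hc.
have Mms : M ms by apply: (hcl m) => // n; case: (hm n).
have hd : nrm ip (y - ms) <= d.
  apply: le_eps => e he.
  have [N hN] := hms (e / 2) ltac:(lra).
  have [k hk] := @eps_small R (e / 2) ltac:(lra).
  have := hN (maxn N k) (leq_maxl _ _).
  have := eps_anti R (leq_maxr N k).
  have := proj2 (hm (maxn N k)).
  have := nrmD hip (y - m (maxn N k)) (m (maxn N k) - ms).
  by rewrite addrA subrK; lra.
pose w := y - ms.
have worth : forall z, M z -> ip w z = 0.
  move=> z hz.
  pose s : R := (Q ip z + 1)^-1.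
  have hs0 : 0 < s by rewrite invr_gt0; have := Q_ge0 hip z; lra.
  have hsz : s * Q ip z < 1.
    rewrite /s mulrC ltr_pdivrMr; last by have := Q_ge0 hip z; lra.
    lra.
  pose t := s%:C * ip w z.
  have := dlow (ms + t *: z) (sub_add hs Mms (sub_scale _ hs hz)).
  have ew : y - (ms + t *: z) = w + (- t) *: z by rewrite /w scaleNr opprD addrA.
  rewrite ew => hle.
  have : Q ip w <= Q ip (w + (- t) *: z).
    rewrite -!(nrm_sq hip) ler_sqr ?nnegrE ?nrm_ge0 //.
    by apply: le_trans hle; rewrite /w.
  rewrite (Q_add hip) (Q_scale hip) (ipZr hip) mag_sq /t.
  move: hsz hs0; move: (Q ip z) (Q_ge0 hip z) (ip w z) => q hq [a1 a2] /= hsz hs0.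
  move=> h.
  have E1 : ((- (s * a1 - 0 * a2)) ^+ 2 + (- (s * a2 + 0 * a1)) ^+ 2) * q +
    2 * (- (s * a1 - 0 * a2) * a1 - - - (s * a2 + 0 * a1) * a2) =
    (s * (s * q - 2)) * (a1 ^+ 2 + a2 ^+ 2) by ring.
  rewrite -addrA E1 lerDl in h.
  have hneg : s * (s * q - 2) < 0 by rewrite pmulr_rlt0 //; lra.
  rewrite nmulr_rge0 // in h.
  have : a1 ^+ 2 + a2 ^+ 2 == 0 by rewrite eq_le h addr_ge0 ?sqr_ge0.
  rewrite paddr_eq0 ?sqr_ge0 // !sqrf_eq0 => /andP [/eqP -> /eqP ->] //.
have w0 : w = 0.
  by apply: horth => z hz; rewrite (ipC hip) worth // conjc0.
by have -> : y = ms by apply/eqP; rewrite -subr_eq0 -/w w0.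
Qed.
End Proj.

Section UB.
Variable R : realType.
Local Notation C := (R[i]).
Variable V : lmodType C.
Variable ip : V -> V -> C.
Hypothesis hH : is_hilbert ip.
Let hip : is_inner_product ip. Proof. by case: hH. Qed.
Variable W : lmodType C.
Variable ipW : W -> W -> C.
Hypothesis hipW : is_inner_product ipW.
Variable D : W -> Prop.
Variable F : W -> V.
Hypothesis hFb : forall f : V, exists Mf : R,
  forall p, D p -> mag (ip (F p) f) <= Mf * nrm ipW p.

Definition En (n : nat) (g : V) := forall p, D p -> mag (ip (F p) g) <= n%:R * nrm ipW p.

Lemma mag_ipB v a b : mag (ip v a) <= mag (ip v b) + nrm ip v * nrm ip (a - b).
Proof.
have := magD (ip v b) (ip v (a - b)); rewrite -(ipDr hip) addrC subrK.
have := CS hip v (a - b); lra.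
Qed.

Lemma ball_bound f0 r n : 0 < r -> (forall h, nrm ip h <= r -> En n (f0 + h)) ->
  exists c : R, 0 <= c /\ forall p, D p -> nrm ip (F p) <= c * nrm ipW p.
Proof.
move=> hr hb.
have c0 : 0 <= 2 * n%:R / r.
  by apply: divr_ge0 (ltW hr); apply: mulr_ge0; apply: ler0n.
exists (2 * n%:R / r); split => //.
move=> p Dp; pose v := F p; rewrite -/v.
have [v0|v0] := eqVneq (nrm ip v) 0.
  by rewrite v0; apply: mulr_ge0 => //; apply: nrm_ge0.
have vpos : 0 < nrm ip v by rewrite lt_def v0 nrm_ge0.
pose h := (r / nrm ip v)%:C *: v.
have hn : nrm ip h = r by rewrite /h (nrmZR hip) ger0_norm ?divr_ge0 ?nrm_ge0 ?ltW // divfK.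
have h1 : mag (ip v (f0 + h)) <= n%:R * nrm ipW p by apply: hb => //; rewrite hn.
have h0 : mag (ip v (f0 + 0)) <= n%:R * nrm ipW p by apply: hb => //; rewrite (nrm0 hip) ltW.
rewrite addr0 in h0.
have := magD (ip v (f0 + h)) (- ip v f0).
rewrite magN -(ipBr hip) [f0 + h]addrC addrK.
have -> : ip v h = (r * nrm ip v)%:C.
  rewrite /h (ipZr hip) conjc_real (ipxx hip) -(nrm_sq hip) -rmorphM /=.
  by congr (_%:C); rewrite expr2 mulrA divfK.
rewrite magR ger0_norm; last by apply: mulr_ge0; [apply: ltW|apply: nrm_ge0].
move=> hh.
rewrite mulrAC ler_pdivlMr //.
rewrite [h + f0]addrC in hh; lra.
Qed.


Definition Pstep (n : nat) (f : V) (r : R) (gs : V * R) :=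
  [/\ 0 < gs.2, gs.2 <= r / 2, gs.2 <= eps R n, nrm ip (gs.1 - f) <= r / 2 &
      forall g', nrm ip (g' - gs.1) <= gs.2 -> ~ En n g'].

Theorem UB : exists c : R, 0 <= c /\ forall p, D p -> nrm ip (F p) <= c * nrm ipW p.
Proof.
apply: NNPP => hneg.
have nball : forall f0 (r : R) n, 0 < r -> exists h, (nrm ip h <= r) /\ (exists p, D p /\ n%:R * nrm ipW p < mag (ip (F p) (f0 + h))).
  move=> f0 r n hr; apply: NNPP => hno; apply: hneg.
  apply: (@ball_bound f0 r n) => // h hh p Dp.
  rewrite leNgt; apply/negP => hlt; apply: hno; exists h; split => //.
  by exists p.
have hstep : forall n f r, 0 < r -> exists gs, Pstep n f r gs.
  move=> n f r hr.
  have [h [hh [p [Dp hp]]]] := nball f (r / 2) n ltac:(lra).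
  pose g := f + h.
  pose gap := mag (ip (F p) g) - n%:R * nrm ipW p.
  have gap0 : 0 < gap by rewrite /gap subr_gt0.
  have hN := nrm_ge0 ip (F p).
  pose q := gap / (2 * (nrm ip (F p) + 1)).
  have q0 : 0 < q by rewrite /q divr_gt0 //; lra.
  have hq : q * (2 * (nrm ip (F p) + 1)) = gap by rewrite /q divfK //; lra.
  pose s := Order.min (r / 2) (Order.min (eps R n) q).
  have s0 : 0 < s by rewrite /s !lt_min eps_pos q0 /=; lra.
  have s1 : s <= r / 2 by rewrite /s ge_min lexx.
  have s2 : s <= eps R n by rewrite /s ge_min !ge_min lexx orbT.
  have s3 : s <= q by rewrite /s ge_min !ge_min lexx !orbT.
  exists (g, s); split => //=.
    rewrite /g [f + h]addrC addrK; exact: hh.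
  move=> g' hg' hE.
  have := hE p Dp; have := mag_ipB (F p) g g'.
  rewrite (nrmB hip g g').
  have : nrm ip (F p) * nrm ip (g' - g) <= nrm ip (F p) * q.
    by apply: ler_wpM2l => //; apply: le_trans hg' s3.
  have := nrm_ge0 ip (g' - g).
  rewrite /gap in gap0 hq.
  move: (nrm ip (F p)) hN hq => N hN hq.
  nra.
pose step n (fr : V * R) : V * R := epsilon (inhabits (0, 0)) (Pstep n fr.1 fr.2).
pose x := fix x (n : nat) : V * R := match n with 0%N => (0, 1) | k.+1 => step k (x k) end.
have xS : forall k, x k.+1 = step k (x k) by [].
have hpos : forall k, 0 < (x k).2.
  elim=> [|k IH]; first by rewrite /= ltr01.
  rewrite xS /step.
  by case: (epsilon_spec (inhabits (0, 0)) _ (hstep k (x k).1 (x k).2 IH)).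
have hP : forall k, Pstep k (x k).1 (x k).2 (x k.+1).
  by move=> k; rewrite xS; apply: epsilon_spec; apply: hstep.
have nest : forall k j, (k <= j)%N -> forall g, nrm ip (g - (x j).1) <= (x j).2 ->
    nrm ip (g - (x k).1) <= (x k).2.
  move=> k; elim=> [|j IH].
    by rewrite leqn0 => /eqP ->.
  rewrite leq_eqVlt => /orP [/eqP -> //|]; rewrite ltnS => hkj g hg.
  apply: IH => //.
  case: (hP j) => _ hs1 _ hg1 _.
  have := nrmD hip (g - (x j.+1).1) ((x j.+1).1 - (x j).1).
  rewrite addrA subrK; lra.
have hc : cauchy ip (fun k => (x k).1).
  move=> e he.
  have [K hK] := @eps_small R (e / 2) ltac:(lra).
  exists K.+1 => n m hn hm.
  have h0 : forall j, nrm ip ((x j).1 - (x j).1) <= (x j).2.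
    by move=> j; rewrite subrr (nrm0 hip) ltW.
  have hn' := nest _ _ hn _ (h0 n).
  have hm' := nest _ _ hm _ (h0 m).
  case: (hP K) => _ _ hs _ _.
  have := nrmD hip ((x n).1 - (x K.+1).1) ((x K.+1).1 - (x m).1).
  rewrite addrA subrK (nrmB hip (x K.+1).1); lra.
have [fs hfs] := complete_conv hip hH hc.
have ball : forall k, nrm ip (fs - (x k).1) <= (x k).2.
  move=> k; apply: le_eps => e he.
  have [N hN] := hfs e he.
  have h1 := hN (maxn N k) (leq_maxl _ _).
  have h0 : forall j, nrm ip ((x j).1 - (x j).1) <= (x j).2.
    by move=> j; rewrite subrr (nrm0 hip) ltW.
  have h2 := nest _ _ (leq_maxr N k) _ (h0 (maxn N k)).
  have := nrmD hip (fs - (x (maxn N k)).1) ((x (maxn N k)).1 - (x k).1).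
  rewrite addrA subrK (nrmB hip fs (x (maxn N k)).1); lra.
have notE : forall k, ~ En k fs.
  by move=> k; case: (hP k) => _ _ _ _ hno; apply: hno; apply: ball.
have [Mf hMf] := hFb fs.
have hb := archi_boundP (normr_ge0 Mf).
apply: (notE (Num.bound `|Mf|)) => p Dp.
apply: le_trans (hMf p Dp) _; apply: ler_wpM2r; first exact: nrm_ge0.
exact: le_trans (ler_norm Mf) (ltW hb).
Qed.

End UB.

Section Lin.
Variable R : realType.
Local Notation C := (R[i]).
Variables (V W : lmodType C) (ipV : V -> V -> C) (ipW : W -> W -> C).
Hypotheses (hV : is_inner_product ipV) (hW : is_inner_product ipW).

Lemma adjoint_linear (A : op V W) (B : op W V) : is_adjoint ipV ipW A B -> linear_op B.
Proof.
move=> hA; split; first split.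
- have := proj2 (hA 0 0); case => // x _; by rewrite (ip0r hW) (ip0r hV).
- move=> a w1 w2 h1 h2.
  have := proj2 (hA (a *: w1 + w2) (a *: app B w1 + app B w2)); case => //.
  move=> x hx; rewrite (ipDr hW) (ipZr hW) (ipDr hV) (ipZr hV).
  by rewrite (proj1 (hA _ _) (conj h1 erefl)) // (proj1 (hA _ _) (conj h2 erefl)).
- move=> a w1 w2 h1 h2.
  have := proj2 (hA (a *: w1 + w2) (a *: app B w1 + app B w2)); case => //.
  move=> x hx; rewrite (ipDr hW) (ipZr hW) (ipDr hV) (ipZr hV).
  by rewrite (proj1 (hA _ _) (conj h1 erefl)) // (proj1 (hA _ _) (conj h2 erefl)).
Qed.

Lemma conv_add ip (hip : is_inner_product ip) (u v : nat -> V) x y :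
  conv ip u x -> conv ip v y -> conv ip (fun n => u n + v n) (x + y).
Proof.
move=> hu hv e he.
have [N1 h1] := hu (e / 2) ltac:(lra); have [N2 h2] := hv (e / 2) ltac:(lra).
exists (maxn N1 N2) => n hn.
have := h1 n (leq_trans (leq_maxl _ _) hn); have := h2 n (leq_trans (leq_maxr _ _) hn).
have := nrmD hip (u n - x) (v n - y).
have -> : u n - x + (v n - y) = u n + v n - (x + y) by rewrite opprD addrACA.
lra.
Qed.

Lemma conv_scale ip (hip : is_inner_product ip) (u : nat -> V) x a :
  conv ip u x -> conv ip (fun n => a *: u n) (a *: x).
Proof.
move=> hu e he.
have hm := mag_ge0 a.
have [N hN] := hu (e / (mag a + 1)) ltac:(apply: divr_gt0 => //; lra).
exists N => n /hN; rewrite ltr_pdivlMr; last lra.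
rewrite -scalerBr (nrmZ hip) => h.
have := nrm_ge0 ip (u n - x); nra.
Qed.

End Lin.

Section Side.
Variable R : realType.
Local Notation C := (R[i]).
Variables (H G : lmodType C) (ipH : H -> H -> C) (ipG : G -> G -> C).
Hypotheses (hH : is_hilbert ipH) (hipG : is_inner_product ipG).
Let hip : is_inner_product ipH. Proof. by case: hH. Qed.
Variables (T Tt : op H H) (G0 G1 Gt0 Gt1 : H -> G).
Hypotheses (hT : linear_op T) (hTt : linear_op Tt).
Hypotheses (hG0 : linear_on (dom T) G0) (hG1 : linear_on (dom T) G1)
  (hGt0 : linear_on (dom Tt) Gt0) (hGt1 : linear_on (dom Tt) Gt1).
Hypothesis condG : forall f g, dom T f -> dom Tt g ->
     ipH (app T f) g - ipH f (app Tt g) = ipG (G1 f) (Gt0 g) - ipG (G0 f) (Gt1 g).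
Hypothesis hD : dense ipG (fun phi => exists f, dom T f /\ G0 f = phi).
Hypothesis hM1 : is_adjoint ipH ipH (restr_ker T G0) (restr_ker Tt Gt0).
Hypothesis hM2 : is_adjoint ipH ipH (restr_ker Tt Gt0) (restr_ker T G0).

Local Notation A0 := (restr_ker T G0).
Local Notation At0 := (restr_ker Tt Gt0).
Local Notation Dg := (fun phi => exists f, dom T f /\ G0 f = phi).

Lemma linD (V' W' : lmodType C) (D' : V' -> Prop) (f : V' -> W') x y :
  linear_on D' f -> D' x -> D' y -> f (x + y) = f x + f y.
Proof. by move=> [_ h] hx hy; have := h 1 x y hx hy; rewrite !scale1r. Qed.
Lemma linZ (V' W' : lmodType C) (D' : V' -> Prop) (f : V' -> W') a x :
  linear_on D' f -> D' x -> f (a *: x) = a *: f x.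
Proof.
case=> [[h0 hs] h] hx; have := h a x 0 hx h0; rewrite !addr0 => ->.
have := h 1 0 0 h0 h0; rewrite !scale1r !addr0 => /eqP.
by rewrite -subr_eq0 opprD addrA subrr sub0r oppr_eq0 => /eqP ->; rewrite addr0.
Qed.
Lemma lin0 (V' W' : lmodType C) (D' : V' -> Prop) (f : V' -> W') :
  linear_on D' f -> f 0 = 0.
Proof. by move=> hl; case: (hl) => [[h0 _] _]; rewrite -(scale0r 0) (linZ 0 hl h0) scale0r. Qed.
Lemma linN (V' W' : lmodType C) (D' : V' -> Prop) (f : V' -> W') x :
  linear_on D' f -> D' x -> f (- x) = - f x.
Proof. by move=> hl hx; rewrite -scaleN1r (linZ _ hl hx) scaleN1r. Qed.
Lemma linB (V' W' : lmodType C) (D' : V' -> Prop) (f : V' -> W') x y :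
  linear_on D' f -> D' x -> D' y -> f (x - y) = f x - f y.
Proof.
move=> hl hx hy; rewrite (linD hl hx) ?(linN hl hy) //.
by case: hl => hs _; apply: sub_opp.
Qed.

Lemma hA0 : linear_op A0.
Proof.
case: hT => [[T0 Ts] Tl]; split; first split.
- by split => //; apply: (lin0 hG0).
- move=> a x y [hx gx] [hy gy]; split; first exact: Ts.
  case: hG0 => _ hl; by rewrite hl // gx gy scaler0 addr0.
- by move=> a x y [hx _] [hy _]; apply: Tl.
Qed.
Lemma hAt0 : linear_op At0.
Proof.
case: hTt => [[T0 Ts] Tl]; split; first split.
- by split => //; apply: (lin0 hGt0).
- move=> a x y [hx gx] [hy gy]; split; first exact: Ts.
  case: hGt0 => _ hl; by rewrite hl // gx gy scaler0 addr0.
- by move=> a x y [hx _] [hy _]; apply: Tl.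
Qed.

Section Res.
Variables (A : op H H) (hA : linear_op A) (l : C) (hl : in_resolvent ipH A l).

Lemma resolv_spec y : dom A (resolv A l y) /\ app A (resolv A l y) - l *: resolv A l y = y.
Proof. by case: hl => _ hs _; apply: (epsilon_spec (inhabits 0) (fun x => dom A x /\ app A x - l *: x = y) (hs y)). Qed.

Lemma resolv_uniq x y : dom A x -> app A x - l *: x = y -> x = resolv A l y.
Proof.
move=> hx hxy; have [h1 h2] := resolv_spec y.
case: hl => hi _ _.
have hd : dom A (x - resolv A l y) by case: hA => hs _; apply: (sub_sub hs hx h1).
apply/eqP; rewrite -subr_eq0; apply/eqP; apply: hi => //.
rewrite (linB hA) // scalerBr.
have ex : app A x = l *: x + y by rewrite -hxy addrC subrK.
move: h2; set r := resolv A l y => h2.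
have er : app A r = y + l *: r by rewrite -{1}h2 subrK.
by rewrite ex er addrKA.
Qed.

Lemma resolv_bound : exists c : R, 0 < c /\ forall y, nrm ipH (resolv A l y) <= c * nrm ipH y.
Proof.
case: hl => _ _ [c [c0 hc]].
have [ce c0'] := nnegC c0.
exists (complex.Re c + 1); split; first lra.
move=> y; have [h1 h2] := resolv_spec y.
have := hc _ h1; rewrite h2 !(vnormE hip) ce -rmorphM lecR => h.
have := nrm_ge0 ipH y; nra.
Qed.

Lemma resolv_lin a y1 y2 : resolv A l (a *: y1 + y2) = a *: resolv A l y1 + resolv A l y2.
Proof.
have [h1 e1] := resolv_spec y1; have [h2 e2] := resolv_spec y2.
move: h1 e1 h2 e2; set r1 := resolv A l y1; set r2 := resolv A l y2 => h1 e1 h2 e2.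
symmetry; apply: resolv_uniq; first by case: hA => [[_ hs] _]; apply: hs.
case: hA => _ hl'; rewrite hl' // -e1 -e2.
by rewrite scalerDr scalerA mulrC -scalerA scalerBr opprD addrACA.
Qed.
End Res.


Section Gam.
Variables (l : C) (hl : in_resolvent ipH A0 l).

Lemma dT_sub f f' : dom T f -> dom T f' -> dom T (f - f').
Proof. by case: hT => hs _; apply: sub_sub. Qed.
Lemma dT_add f f' : dom T f -> dom T f' -> dom T (f + f').
Proof. by case: hT => hs _; apply: sub_add. Qed.
Lemma dT_scale a f : dom T f -> dom T (a *: f).
Proof. by case: hT => hs _; apply: sub_scale. Qed.

Lemma gamma_uniq f f' : dom T f -> app T f = l *: f -> dom T f' -> app T f' = l *: f' ->
  G0 f = G0 f' -> f = f'.
Proof.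
move=> hf ef hf' ef' eg.
have hd : dom A0 (f - f') by split; [apply: dT_sub|rewrite (linB hG0) // eg subrr].
apply/eqP; rewrite -subr_eq0; apply/eqP.
case: hl => hi _ _; apply: hi => //=.
by rewrite (linB hT) // ef ef' scalerBr.
Qed.

Lemma gamma_spec phi : Dg phi ->
  dom T (app (gamma_field T G0 l) phi) /\
  app T (app (gamma_field T G0 l) phi) = l *: app (gamma_field T G0 l) phi /\
  G0 (app (gamma_field T G0 l) phi) = phi.
Proof.
move=> [h [hh <-]] /=.
apply: (epsilon_spec (inhabits 0) (fun f => dom T f /\ app T f = l *: f /\ G0 f = G0 h)).
have [hk ek] := resolv_spec hl (app T h - l *: h).
move: hk ek; set k := resolv _ _ _.
move=> [hk gk] /= ek.
exists (h - k); split; first exact: dT_sub.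
split; last by rewrite (linB hG0) // gk subr0.
have e : app T k = app T h - l *: h + l *: k by rewrite -ek subrK.
by rewrite (linB hT) // e scalerBr opprD addrA opprB subrKC.
Qed.

Lemma gamma_eq phi f : dom T f -> app T f = l *: f -> G0 f = phi ->
  app (gamma_field T G0 l) phi = f.
Proof.
move=> hf ef gf.
have Dp : Dg phi by exists f.
have [h1 [h2 h3]] := gamma_spec Dp.
by apply: gamma_uniq => //; rewrite h3 gf.
Qed.

End Gam.


Lemma conv_cauchy (u : nat -> H) x : conv ipH u x -> cauchy ipH u.
Proof.
move=> hu e he; have [N hN] := hu (e / 2) ltac:(lra).
exists N => n m hn hm; have := hN n hn; have := hN m hm.
have := nrmD hip (u n - x) (x - u m).
by rewrite addrA subrK (nrmB hip x); lra.
Qed.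

Lemma zmod4 (Z : zmodType) (a b c d : Z) : a - b + (c - d) = (a - d) - (b - c).
Proof. by rewrite opprB addrACA [RHS]addrACA [- d + _]addrC. Qed.

Lemma zid (Z:zmodType) (p q s y : Z) : (p - q + s) + (y + q) - (s + p) = y.
Proof. by rewrite [p - q + s]addrAC (addrC y q) subrKA (addrC s p) [p + s + y]addrC addrK. Qed.
Lemma vec_id1 (V : lmodType C) (w z : C) (a b y Aa Ab : V) :
  Aa - z *: a = y -> Ab - w *: b = a -> ((w - z) *: Ab + Aa) - w *: ((w - z) *: b + a) = y.
Proof.
move=> ea eb.
have -> : Aa = y + z *: a by rewrite -ea subrK.
have -> : Ab = a + w *: b by rewrite -eb subrK.
rewrite !scalerDr !scalerA (mulrC w (w - z)) scalerBl.
by rewrite zid.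
Qed.
Lemma vec_id2 (V : lmodType C) (l n : C) (u k Tu Tk : V) :
  Tu = n *: u -> Tk - l *: k = u -> (l - n) *: Tk + Tu = l *: ((l - n) *: k + u).
Proof.
move=> eu ek.
have -> : Tk = u + l *: k by rewrite -ek subrK.
rewrite eu !scalerDr !scalerA (mulrC l (l - n)) scalerBl.
by rewrite [_ + n *: u]addrC addrA subrKC addrC.
Qed.

Section Conj.
Variables (l : C) (hl : in_resolvent ipH A0 l).

Lemma KI h x : dom A0 h -> dom At0 x ->
  ipH (app A0 h - l *: h) x = ipH h (app At0 x - conjc l *: x).
Proof.
move=> hh hx.
have e := proj1 (hM1 x (app At0 x)) (conj hx erefl) h hh.
by rewrite (ipBl hip) (ipBr hip) (ipZl hip) (ipZr hip) conjcK e.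
Qed.

Lemma below : exists c : R, 0 < c /\ forall x, dom At0 x ->
  nrm ipH x <= c * nrm ipH (app At0 x - conjc l *: x).
Proof.
have [c [c0 hc]] := resolv_bound hl.
exists c; split => // x hx.
set y := app At0 x - _.
have [hh eh] := resolv_spec hl x.
have e : Q ipH x = complex.Re (ipH (resolv A0 l x) y).
  by rewrite /Q -KI // eh.
have h1 := Re_le_mag (ipH (resolv A0 l x) y).
have h2 := CS hip (resolv A0 l x) y.
have h3 := hc x.
have h4 := ler_norm (complex.Re (ipH (resolv A0 l x) y)).
have hx0 := nrm_ge0 ipH x; have hy0 := nrm_ge0 ipH y.
have hr0 := nrm_ge0 ipH (resolv A0 l x).
rewrite -(nrm_sq hip) in e.
have : nrm ipH x ^+ 2 <= c * nrm ipH y * nrm ipH x.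
  rewrite e; apply: le_trans h4 _; apply: le_trans h1 _; apply: le_trans h2 _.
  by rewrite mulrAC; apply: ler_wpM2r.
have [x0|x0] := eqVneq (nrm ipH x) 0.
  by move=> _; rewrite x0; apply: mulr_ge0 => //; apply: ltW.
move=> h5; have xp : 0 < nrm ipH x by rewrite lt_def x0 hx0.
by rewrite expr2 ler_pM2r in h5.
Qed.


Lemma conj_res : in_resolvent ipH At0 (conjc l).
Proof.
have [c [c0 hc]] := below.
have hsub : is_subspace (dom At0) by case: hAt0.
split.
- move=> x hx ex; apply: (nrm_eq0 hip); apply/eqP; rewrite eq_le nrm_ge0 andbT.
  by have := hc x hx; rewrite ex subrr (nrm0 hip) mulr0.
- pose M := fun y => exists x, dom At0 x /\ app At0 x - conjc l *: x = y.
  have hM : is_subspace M.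
    split.
      exists 0; split; first by case: hsub.
      by rewrite (lin0 hAt0) scaler0 subr0.
    move=> a y1 y2 [x1 [h1 <-]] [x2 [h2 <-]].
    exists (a *: x1 + x2); split; first by case: hsub => _; apply.
    case: hAt0 => _ hl'; rewrite hl' //.
    by rewrite scalerDr scalerA mulrC -scalerA scalerBr opprD addrACA.
  apply: (full_of_orth hH hM).
  + move=> u y hu hconv.
    pose x n := epsilon (inhabits 0) (fun x => dom At0 x /\ app At0 x - conjc l *: x = u n).
    have hx : forall n, dom At0 (x n) /\ app At0 (x n) - conjc l *: x n = u n.
      by move=> n; apply: (epsilon_spec (inhabits 0) _ (hu n)).
    have hcx : cauchy ipH x.
      move=> e he; have hcu : cauchy ipH u by exact: conv_cauchy hconv.
      have [N hN] := hcu (e / c) ltac:(by apply: divr_gt0).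
      exists N => n m hn hm.
      have [h1 e1] := hx n; have [h2 e2] := hx m.
      have hd : dom At0 (x n - x m) by apply: sub_sub.
      have := hc _ hd; rewrite (linB hAt0) // scalerBr opprB.
      rewrite -[app At0 (x n) - app At0 (x m) + _]/(_) .
      have -> : app At0 (x n) - app At0 (x m) + (conjc l *: x m - conjc l *: x n) = u n - u m.
        by rewrite -e1 -e2 zmod4.
      have := hN n m hn hm; rewrite ltr_pdivlMr // => h1' h2'.
      by apply: le_lt_trans h2' _; rewrite mulrC.
    have [xs hxs] := complete_conv hip hH hcx.
    have key : forall h, dom A0 h -> ipH (app A0 h) xs = ipH h (y + conjc l *: xs).
      move=> h hh.
      apply: (@clim_unique _ (fun n => ipH (app A0 h) (x n))).
        exact: clim_ipr.
      apply: (@clim_ext _ (fun n => ipH h (u n + conjc l *: x n))).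
        move=> n; have [h1 e1] := hx n.
        rewrite -e1 subrK.
        by rewrite (proj1 (hM1 (x n) (app At0 (x n))) (conj h1 erefl) h hh).
      by apply: clim_ipr => //; apply: conv_add => //; apply: conv_scale.
    have [hxs' exs] := proj2 (hM1 xs (y + conjc l *: xs)) key.
    by exists xs; split => //; rewrite exs addrK.
  + move=> w hw.
    have key : forall x, dom At0 x -> ipH (app At0 x) w = ipH x (l *: w).
      move=> x hx.
      have := hw (app At0 x - conjc l *: x) (ex_intro _ x (conj hx erefl)).
      rewrite (ipBl hip) (ipZl hip) (ipZr hip) => /eqP; rewrite subr_eq0 => /eqP ->.
      by [].
    have [hw' ew] := proj2 (hM2 w (l *: w)) key.
    by case: hl => hi _ _; apply: hi.
- exists c%:C; split; first by rewrite lecR ltW.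
  by move=> x hx; rewrite !(vnormE hip) -rmorphM lecR; apply: hc.
Qed.

End Conj.


Section Main.
Variables (l : C) (hl : in_resolvent ipH A0 l).
Let hlt := conj_res hl.
Local Notation gam := (gamma_field T G0 l).
Local Notation Rt := (resolv At0 (conjc l)).

Lemma adj_formula phi f : Dg phi -> ipH (app gam phi) f = ipG phi (Gt1 (Rt f)).
Proof.
move=> Dp; have [hf [ef gf]] := gamma_spec hl Dp.
have [[hg gg] eg] := resolv_spec hlt f.
move: hf ef gf hg gg eg; set fl := app gam phi; set g := Rt f => hf ef gf hg gg eg.
have e2 : app Tt g = f + conjc l *: g by rewrite -eg subrK.
have := condG hf hg; rewrite ef e2 gg gf (ip0r hipG) (ipZl hip) (ipDr hip) (ipZr hip) conjcK.
by rewrite opprD addrA addrAC subrr !sub0r => /oppr_inj.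
Qed.

Lemma gam_lin : linear_op gam.
Proof.
split; first split.
- by exists 0; split; [case: hT => [[]]|apply: (lin0 hG0)].
- move=> a p1 p2 [f1 [h1 <-]] [f2 [h2 <-]].
  exists (a *: f1 + f2); split; first by apply: dT_add => //; apply: dT_scale.
  by case: hG0 => _ ->.
- move=> a p1 p2 D1 D2.
  have [h1 [e1 g1]] := gamma_spec hl D1; have [h2 [e2 g2]] := gamma_spec hl D2.
  apply: (gamma_eq hl).
  + by apply: dT_add => //; apply: dT_scale.
  + case: hT => _ ->; rewrite // ?e1 ?e2.
      by rewrite scalerA mulrC -scalerA scalerDr.
  + by case: hG0 => _ ->; rewrite ?g1 ?g2.
Qed.

Lemma gam_bound : exists c : R, 0 <= c /\ forall phi, Dg phi -> nrm ipH (app gam phi) <= c * nrm ipG phi.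
Proof.
apply: (UB hH) => f.
exists (nrm ipG (Gt1 (Rt f))) => p Dp.
rewrite adj_formula // mulrC; exact: (CS hipG).
Qed.


Lemma part_i : [/\ bounded_op ipG ipH gam, dom gam = Dg, dense ipG (dom gam) &
         forall f, range gam f <-> ker_shift T l f].
Proof.
split => //.
- split; first exact: gam_lin.
  have [c [c0 hc]] := gam_bound.
  exists c%:C; split; first by rewrite lecR.
  by move=> x hx; rewrite !(vnormE _) // -rmorphM lecR; apply: hc.
- move=> f; split.
    by move=> [p [Dp <-]]; have [h1 [h2 _]] := gamma_spec hl Dp.
  move=> [hf ef]; exists (G0 f); split; first by exists f.
  exact: gamma_eq.
Qed.

Lemma Rt_dom f : dom Tt (Rt f).
Proof. by have [[h _] _] := resolv_spec hlt f. Qed.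

Lemma part_iii :
  [/\ is_adjoint ipG ipH gam (Op (fun _ : H => True) (fun f => Gt1 (Rt f))),
      bounded_op ipH ipG (Op (fun _ : H => True) (fun f => Gt1 (Rt f))) &
      forall f, exists g, dom Tt g /\ Gt1 g = Gt1 (Rt f)].
Proof.
split.
- move=> w v; split.
    by move=> [_ <-] x Dx; apply: adj_formula.
  move=> h; split => //=.
  apply/eqP; rewrite eq_sym -subr_eq0; apply/eqP.
  apply: (orth_dense hipG hD) => x Dx.
  by rewrite (ipBr hipG) -h // adj_formula // subrr.
- split.
    split; first by split.
    move=> a y1 y2 _ _ /=.
    rewrite (resolv_lin hAt0 hlt).
    by case: hGt1 => _ ->; rewrite //; apply: Rt_dom.
  have [c [c0 hc]] := gam_bound.
  exists c%:C; split; first by rewrite lecR.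
  move=> f _ /=; rewrite !(vnormE _) // -rmorphM lecR.
  set w := Gt1 (Rt f).
  have hw0 := nrm_ge0 ipG w; have hf0 := nrm_ge0 ipH f.
  suff : nrm ipG w ^+ 2 <= c * nrm ipH f * nrm ipG w.
    have [x0|x0] := eqVneq (nrm ipG w) 0.
      by move=> _; rewrite x0; apply: mulr_ge0.
    move=> h5; have xp : 0 < nrm ipG w by rewrite lt_def x0 hw0.
    by rewrite expr2 ler_pM2r in h5.
  apply: le_eps => e he.
  pose e' := e / (nrm ipG w + c * nrm ipH f + 1).
  have hden : 0 < nrm ipG w + c * nrm ipH f + 1.
    have := mulr_ge0 c0 hf0; lra.
  have he' : 0 < e' by apply: divr_gt0.
  have he'C : 0 < e'%:C by rewrite ltcR.
  have [p [Dp hp]] := hD w he'C.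
  rewrite (vnormE hipG) ltcR in hp.
  have e1 : Q ipG w = complex.Re (ipG (w - p) w) + complex.Re (ipG p w).
    by rewrite /Q -raddfD /= -(ipDl hipG) subrK.
  have e2 : ipG p w = ipH (app gam p) f.
    by rewrite adj_formula.
  have h1 := Re_le_mag (ipG (w - p) w); have h1' := ler_norm (complex.Re (ipG (w - p) w)).
  have h2 := Re_le_mag (ipG p w); have h2' := ler_norm (complex.Re (ipG p w)).
  have h3 := CS hipG (w - p) w.
  have h4 := CS hip (app gam p) f.
  have h5 := hc p Dp.
  have h6 : nrm ipG p <= nrm ipG w + e'.
    have := nrmD hipG w (p - w); rewrite addrC subrK (nrmB hipG p w); lra.
  rewrite e2 in h2 h2'.
  have hg0 := nrm_ge0 ipH (app gam p).
  have hp0 := nrm_ge0 ipG p.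
  have hwp := nrm_ge0 ipG (w - p).
  have k1 : nrm ipG (w - p) * nrm ipG w <= e' * nrm ipG w by apply: ler_wpM2r => //; apply: ltW.
  have k2 : nrm ipH (app gam p) * nrm ipH f <= c * nrm ipG p * nrm ipH f by apply: ler_wpM2r.
  have k3 : c * nrm ipG p * nrm ipH f <= c * (nrm ipG w + e') * nrm ipH f.
    by apply: ler_wpM2r => //; apply: ler_wpM2l.
  have k4 : e' * (nrm ipG w + c * nrm ipH f + 1) = e by rewrite /e' divfK // gt_eqF.
  rewrite (nrm_sq hipG) e1 e2.
  have k5 : e' * (nrm ipG w + c * nrm ipH f) <= e' * (nrm ipG w + c * nrm ipH f + 1).
    by apply: ler_wpM2l; [apply: ltW|lra].
  lra.
- by move=> f; exists (Rt f); split => //; apply: Rt_dom.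
Qed.

End Main.


Lemma res_ident (z w : C) (hz : in_resolvent ipH A0 z) (hw : in_resolvent ipH A0 w) y :
  resolv A0 w y - resolv A0 z y = (w - z) *: resolv A0 w (resolv A0 z y).
Proof.
have [ha ea] := resolv_spec hz y.
move: ha ea; set a := resolv A0 z y => ha ea.
have [hb eb] := resolv_spec hw a.
move: hb eb; set b := resolv A0 w a => hb eb.
have hx : dom A0 ((w - z) *: b + a) by case: hA0 => [[_ hs] _]; apply: hs.
have := resolv_uniq hA0 hw hx.
case: hA0 => _ hl'; rewrite hl' // => /(_ y (vec_id1 ea eb)) <-.
by rewrite addrK.
Qed.

Lemma gamma_res (l n : C) (hl : in_resolvent ipH A0 l) (hn : in_resolvent ipH A0 n) phi :
  Dg phi -> app (gamma_field T G0 l) phi =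
    app (gamma_field T G0 n) phi + (l - n) *: resolv A0 l (app (gamma_field T G0 n) phi).
Proof.
move=> Dp; have [hu [eu gu]] := gamma_spec hn Dp.
move: hu eu gu; set u := app (gamma_field T G0 n) phi => hu eu gu.
have [[hk gk] ek] := resolv_spec hl u.
move: hk gk ek; set k := resolv A0 l u => hk gk ek /=.
rewrite addrC; apply: gamma_eq => //.
- by apply: dT_add => //; apply: dT_scale.
- by case: hT => _ ->; rewrite // (vec_id2 eu ek).
- by case: hG0 => _ ->; rewrite // gk scaler0 add0r.
Qed.

Lemma holo phi : Dg phi ->
  holomorphic_on ipH (in_resolvent ipH A0) (fun l => app (gamma_field T G0 l) phi).
Proof.
move=> Dp z hz.
set u := app (gamma_field T G0 z) phi.
exists (resolv A0 z u) => e he.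
have [ee er] := posC he; set r := complex.Re e in ee er.
have [c [c0 hc]] := resolv_bound hz.
set N := nrm ipH (resolv A0 z u).
have hN : 0 <= N by apply: nrm_ge0.
pose d := Order.min (2 * c)^-1 (r / (2 * c * (N + 1))).
have d0 : 0 < d.
  rewrite lt_min invr_gt0 mulr_gt0 //= divr_gt0 //.
  by rewrite mulr_gt0 ?mulr_gt0 //; lra.
exists d%:C; split; first by rewrite ltcR.
move=> w hw wz; rewrite normE ltcR => hwz.
have hm0 := mag_ge0 (w - z).
have hd1 : mag (w - z) * (2 * c) <= 1.
  have : mag (w - z) <= (2 * c)^-1 by apply: le_trans (ltW hwz) _; rewrite ge_min lexx.
  by rewrite -ler_pdivlMr ?mulr_gt0 // div1r.
have hd2 : mag (w - z) * (2 * c * (N + 1)) < r.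
  have : mag (w - z) < r / (2 * c * (N + 1)).
    by apply: lt_le_trans hwz _; rewrite ge_min lexx orbT.
  by rewrite ltr_pdivlMr // !mulr_gt0 //; lra.
have bw : forall y, nrm ipH (resolv A0 w y) <= 2 * c * nrm ipH y.
  move=> y; have [hx ex] := resolv_spec hw y.
  move: hx ex; set x := resolv A0 w y => hx ex.
  have exz : x = resolv A0 z (y + (w - z) *: x).
    apply: (resolv_uniq hA0 hz hx).
    by rewrite -ex scalerBl subrKA.
  have := hc (y + (w - z) *: x); rewrite -exz => h.
  have := nrmD hip y ((w - z) *: x); rewrite (nrmZ hip) => h2.
  have := nrm_ge0 ipH x; have := nrm_ge0 ipH y.
  nra.
have wz0 : w - z != 0 by rewrite subr_eq0.
have eq1 : (w - z)^-1 *: (app (gamma_field T G0 w) phi - u) = resolv A0 w u.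
  rewrite (gamma_res hw hz Dp) -/u [u + _]addrC addrK scalerA mulVf // scale1r.
  by [].
rewrite eq1 (res_ident hz hw) (vnormE hip) (nrmZ hip) ee ltcR.
have := bw (resolv A0 z u); rewrite -/N => hb.
have : mag (w - z) * nrm ipH (resolv A0 w (resolv A0 z u)) <= mag (w - z) * (2 * c * N).
  by apply: ler_wpM2l.
move=> h3.
have : mag (w - z) * (2 * c * N) <= mag (w - z) * (2 * c * (N + 1)).
  apply: ler_wpM2l => //; apply: ler_wpM2l; first by apply: mulr_ge0 => //; apply: ltW.
  lra.
lra.
Qed.

End Side.

Lemma lin_of_sub (R : realType) (H : lmodType R[i]) (ipH : H -> H -> R[i])
  (hipH : is_inner_product ipH) (S Sst T : op H H)
  (hSst : is_adjoint ipH ipH S Sst) (hTsub : op_sub T Sst) (hsT : is_subspace (dom T)) :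
  linear_op T.
Proof.
have hSl := adjoint_linear hipH hipH hSst.
split => // a x y hx hy.
have [d1 e1] := hTsub x hx; have [d2 e2] := hTsub y hy.
have hxy : dom T (a *: x + y) by case: hsT => _; apply.
have [_ e3] := hTsub _ hxy.
by rewrite -e1 -e2 -e3; case: hSl => _ ->.
Qed.

Unset Implicit Arguments.
Local Close Scope complex_scope.

Theorem proposition3p3
  (R : realType)
  (H : lmodType R[i]) (ipH : H -> H -> R[i])
  (hH : is_hilbert ipH) (sepH : is_separable ipH)
  (G : lmodType R[i]) (ipG : G -> G -> R[i]) (hG : is_hilbert ipG)
  (* the adjoint pair {S, S~} and the adjoints S^*, S~^* *)
  (S St : op H H) (hS : adjoint_pair ipH S St)
  (Sst Stst : op H H)
  (hSst : is_adjoint ipH ipH S Sst) (hStst : is_adjoint ipH ipH St Stst)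
  (* cores T ⊂ S^*, T~ ⊂ S~^* with closures S^*, S~^* *)
  (T Tt : op H H)
  (hTsub : op_sub T Sst) (hTtsub : op_sub Tt Stst)
  (hTcl : is_closure_of ipH ipH T Sst) (hTtcl : is_closure_of ipH ipH Tt Stst)
  (* the boundary maps *)
  (G0 G1 : H -> G) (Gt0 Gt1 : H -> G)
  (hG0 : linear_on (dom T) G0) (hG1 : linear_on (dom T) G1)
  (hGt0 : linear_on (dom Tt) Gt0) (hGt1 : linear_on (dom Tt) Gt1)
  (* (G) abstract Green identity *)
  (condG : forall f g, dom T f -> dom Tt g ->
     ipH (app T f) g - ipH f (app Tt g) = ipG (G1 f) (Gt0 g) - ipG (G0 f) (Gt1 g))
  (* (D) density of ran Gamma0, ran Gamma0~ *)
  (condD : dense ipG (fun phi => exists f, dom T f /\ G0 f = phi) /\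
           dense ipG (fun psi => exists g, dom Tt g /\ Gt0 g = psi))
  (* (M) A0^* = A0~ and A0~^* = A0 *)
  (condM : is_adjoint ipH ipH (restr_ker T G0) (restr_ker Tt Gt0) /\
           is_adjoint ipH ipH (restr_ker Tt Gt0) (restr_ker T G0))
  (* rho(A0) is nonempty *)
  (hrho : exists l, in_resolvent ipH (restr_ker T G0) l) :
  (* (i) *)
  (forall l, in_resolvent ipH (restr_ker T G0) l ->
     [/\ bounded_op ipG ipH (gamma_field T G0 l),
         dom (gamma_field T G0 l) = (fun phi => exists f, dom T f /\ G0 f = phi),
         dense ipG (dom (gamma_field T G0 l)) &
         forall f, range (gamma_field T G0 l) f <-> ker_shift T l f]) /\
  (forall mu, in_resolvent ipH (restr_ker Tt Gt0) mu ->
     [/\ bounded_op ipG ipH (gamma_field Tt Gt0 mu),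
         dom (gamma_field Tt Gt0 mu) = (fun psi => exists g, dom Tt g /\ Gt0 g = psi),
         dense ipG (dom (gamma_field Tt Gt0 mu)) &
         forall g, range (gamma_field Tt Gt0 mu) g <-> ker_shift Tt mu g]) /\
  (* (ii) holomorphy *)
  (forall phi, (exists f, dom T f /\ G0 f = phi) ->
     holomorphic_on ipH (in_resolvent ipH (restr_ker T G0))
       (fun l => app (gamma_field T G0 l) phi)) /\
  (forall psi, (exists g, dom Tt g /\ Gt0 g = psi) ->
     holomorphic_on ipH (in_resolvent ipH (restr_ker Tt Gt0))
       (fun mu => app (gamma_field Tt Gt0 mu) psi)) /\
  (* (ii) resolvent identities for the gamma-fields *)
  (forall l nu, in_resolvent ipH (restr_ker T G0) l -> in_resolvent ipH (restr_ker T G0) nu ->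
     forall phi, (exists f, dom T f /\ G0 f = phi) ->
       app (gamma_field T G0 l) phi =
       app (gamma_field T G0 nu) phi
         + (l - nu) *: resolv (restr_ker T G0) l (app (gamma_field T G0 nu) phi)) /\
  (forall mu om, in_resolvent ipH (restr_ker Tt Gt0) mu -> in_resolvent ipH (restr_ker Tt Gt0) om ->
     forall psi, (exists g, dom Tt g /\ Gt0 g = psi) ->
       app (gamma_field Tt Gt0 mu) psi =
       app (gamma_field Tt Gt0 om) psi
         + (mu - om) *: resolv (restr_ker Tt Gt0) mu (app (gamma_field Tt Gt0 om) psi)) /\
  (* (iii) adjoints of the gamma-fields *)
  (forall l, in_resolvent ipH (restr_ker T G0) l ->
     [/\ is_adjoint ipG ipH (gamma_field T G0 l)
           (Op (fun _ : H => True) (fun f => Gt1 (resolv (restr_ker Tt Gt0) (conjc l) f))),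
         bounded_op ipH ipG
           (Op (fun _ : H => True) (fun f => Gt1 (resolv (restr_ker Tt Gt0) (conjc l) f))) &
         forall f, exists g, dom Tt g /\ Gt1 g = Gt1 (resolv (restr_ker Tt Gt0) (conjc l) f)]) /\
  (forall mu, in_resolvent ipH (restr_ker Tt Gt0) mu ->
     [/\ is_adjoint ipG ipH (gamma_field Tt Gt0 mu)
           (Op (fun _ : H => True) (fun g => G1 (resolv (restr_ker T G0) (conjc mu) g))),
         bounded_op ipH ipG
           (Op (fun _ : H => True) (fun g => G1 (resolv (restr_ker T G0) (conjc mu) g))) &
         forall g, exists f, dom T f /\ G1 f = G1 (resolv (restr_ker T G0) (conjc mu) g)]).
Proof.
have hipH : is_inner_product ipH by case: hH.
have hipG : is_inner_product ipG by case: hG.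
have hT : linear_op T by apply: (lin_of_sub hipH hSst hTsub); case: hG0.
have hTt : linear_op Tt by apply: (lin_of_sub hipH hStst hTtsub); case: hGt0.
case: condD => hD1 hD2; case: condM => hM1 hM2.
have condG' : forall g f, dom Tt g -> dom T f ->
    ipH (app Tt g) f - ipH g (app T f) = ipG (Gt1 g) (G0 f) - ipG (Gt0 g) (G1 f).
  move=> g f hg hf; have := condG f g hf hg => /(congr1 conjc).
  rewrite !rmorphB /= -!(ipC hipH) -!(ipC hipG) => h.
  by rewrite -opprB h opprB.
split; first by move=> l hl; apply: (part_i hH hipG hT hTt hG0 hGt0 condG hD1 hM1 hM2 hl).
split; first by move=> l hl; apply: (part_i hH hipG hTt hT hGt0 hG0 condG' hD2 hM2 hM1 hl).
split; first by move=> phi Dp; apply: (holo hH hT hG0 Dp).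
split; first by move=> phi Dp; apply: (holo hH hTt hGt0 Dp).
split; first by move=> l n hl hn phi Dp; apply: (gamma_res hT hG0 hl hn Dp).
split; first by move=> l n hl hn phi Dp; apply: (gamma_res hTt hGt0 hl hn Dp).
split; first by move=> l hl; apply: (part_iii hH hipG hT hTt hG0 hGt0 hGt1 condG hD1 hM1 hM2 hl).
by move=> l hl; apply: (part_iii hH hipG hTt hT hGt0 hG0 hG1 condG' hD2 hM2 hM1 hl).
Qed.
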